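(* Let $I$ be a nonempty set and $H$ a real Hilbert space; for each $i\in I$ let $C_i$ be a nonempty compact convex subset of $H$. Equip $H^I$ with the product topology generated by the norm topology on each factor $H$. For each $i\in I$ let $T_i:C_i\to C_i$ be nonexpansive with $\mathrm{Fix}(T_i)\neq\emptyset$, and let $f_i:C_i\to C_i$ be an $\alpha_i$-contraction, i.e. $\|f_i(x)-f_i(y)\|\le\alpha_i\|x-y\|$ with $0\le\alpha_i<1$. Let $\{\epsilon_n\}\subseteq(0,1)$ with $\lim_n\epsilon_n=0$. Then for each $i\in I$ there exist a unique sunny nonexpansive retraction $P_i$ of $C_i$ onto $\mathrm{Fix}(T_i)$ and a point $x_i\in C_i$ such that the sequence $\{g_n\}$ in $H^I$ defined by $g_n(i)=z_{n,i}$ $(i\in I)$, where $z_{n,i}\in C_i$ satisfies $$z_{n,i}=\epsilon_nf_i(z_{n,i})+(1-\epsilon_n)\frac1n\sum_{k=1}^nT_i^kz_{n,i},$$ converges in the product topology of $H^I$ to the function $g:I\to H$ defined by $g(i)=P_ix_i$.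
   Context: A retraction $P$ of $C$ onto $D\subseteq C$ (i.e. $Px=x$ for $x\in D$) is sunny if $P(Px+t(x-Px))=Px$ whenever $x\in C$, $t\ge0$ and $Px+t(x-Px)\in C$. $\mathrm{Fix}(T)$ is the set of fixed points of $T$. *)

(* Defs.v *)
From HB Require Import structures.
From mathcomp Require Import all_boot all_order all_algebra.
From mathcomp Require Import all_classical all_reals all_analysis.
Set Implicit Arguments. Unset Strict Implicit. Unset Printing Implicit Defensive.
Import Order.TTheory GRing.Theory Num.Theory.
Import numFieldNormedType.Exports.
Local Open Scope classical_set_scope.
Local Open Scope ring_scope.

Section Defs.
Context {R : realType} {H : normedModType R}.

(* ip is a real inner product inducing the norm of H:
   symmetric, linear in the first argument, and <x,x> = ||x||^2.
   Together with completeness of H this makes H a real Hilbert space. *)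
Definition is_inner_product (ip : H -> H -> R) : Prop :=
  (forall x y, ip x y = ip y x) /\
  (forall (a : R) x y z, ip (a *: x + y) z = a * ip x z + ip y z) /\
  (forall x, ip x x = `|x| ^+ 2).

Definition convex_set_in (C : set H) : Prop :=
  forall x y (t : R), C x -> C y -> 0 <= t -> t <= 1 -> C (t *: x + (1 - t) *: y).

Definition maps_into (C : set H) (T : H -> H) : Prop :=
  forall x, C x -> C (T x).

Definition nonexpansive_on (C : set H) (T : H -> H) : Prop :=
  forall x y, C x -> C y -> `|T x - T y| <= `|x - y|.

Definition contraction_on (C : set H) (f : H -> H) (alpha : R) : Prop :=
  0 <= alpha /\ alpha < 1 /\
  forall x y, C x -> C y -> `|f x - f y| <= alpha * `|x - y|.

Definition Fix (C : set H) (T : H -> H) : set H := [set x | C x /\ T x = x].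

Definition retraction_onto (C D : set H) (P : H -> H) : Prop :=
  (forall x, C x -> D (P x)) /\ (forall x, D x -> P x = x).

Definition sunny_on (C : set H) (P : H -> H) : Prop :=
  forall x (t : R), C x -> 0 <= t -> C (P x + t *: (x - P x)) ->
    P (P x + t *: (x - P x)) = P x.

Definition sunny_nonexpansive_retraction (C D : set H) (P : H -> H) : Prop :=
  retraction_onto C D P /\ sunny_on C P /\ nonexpansive_on C P.

Definition cesaro_avg (n : nat) (T : H -> H) (z : H) : H :=
  (n%:R)^-1 *: \sum_(1 <= k < n.+1) iter k T z.

End Defs.

(* Main.v *)
Require Import Defs.
From HB Require Import structures.
From mathcomp Require Import all_boot all_order all_algebra.
From mathcomp Require Import all_classical all_reals all_analysis.
From mathcomp Require Import lra ring.
Import Order.TTheory GRing.Theory Num.Theory.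
Import numFieldNormedType.Exports.
Local Open Scope classical_set_scope.
Local Open Scope ring_scope.


Section Hilbert.
Context {R : realType} {H : normedModType R} (ip : H -> H -> R).
Hypothesis Hip : is_inner_product ip.

Lemma ipC x y : ip x y = ip y x. Proof. by case: Hip. Qed.
Lemma ipxx x : ip x x = `|x| ^+ 2. Proof. by case: Hip => _ []. Qed.
Lemma iplin a x y z : ip (a *: x + y) z = a * ip x z + ip y z.
Proof. by case: Hip => _ []. Qed.
Lemma ip0l z : ip 0 z = 0.
Proof. have := iplin 1 0 0 z; rewrite scaler0 addr0 mul1r; lra. Qed.
Lemma ipDl x y z : ip (x + y) z = ip x z + ip y z.
Proof. by rewrite -[x]scale1r iplin mul1r scale1r. Qed.
Lemma ipZl a x z : ip (a *: x) z = a * ip x z.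
Proof. by rewrite -[a *: x]addr0 iplin ip0l addr0. Qed.
Lemma ipNl x z : ip (- x) z = - ip x z.
Proof. by rewrite -scaleN1r ipZl mulN1r. Qed.
Lemma ipBl x y z : ip (x - y) z = ip x z - ip y z.
Proof. by rewrite ipDl ipNl. Qed.
Lemma ip0r z : ip z 0 = 0. Proof. by rewrite ipC ip0l. Qed.
Lemma ipDr x y z : ip z (x + y) = ip z x + ip z y.
Proof. by rewrite ipC ipDl !(ipC z). Qed.
Lemma ipZr a x z : ip z (a *: x) = a * ip z x.
Proof. by rewrite ipC ipZl ipC. Qed.
Lemma ipNr x z : ip z (- x) = - ip z x.
Proof. by rewrite ipC ipNl ipC. Qed.
Lemma ipBr x y z : ip z (x - y) = ip z x - ip z y.
Proof. by rewrite ipDr ipNr. Qed.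
Lemma ip_sumr (I : Type) (r : seq I) (P : pred I) (F : I -> H) x :
  ip x (\sum_(i <- r | P i) F i) = \sum_(i <- r | P i) ip x (F i).
Proof. by rewrite (big_morph (ip x) (fun a b => ipDr a b x) (ip0r x)). Qed.
Lemma normD2 x y : `|x + y| ^+ 2 = `|x| ^+ 2 + 2 * ip x y + `|y| ^+ 2.
Proof. rewrite -!ipxx ipDl !ipDr (ipC y x); ring. Qed.
Lemma normB2 x y : `|x - y| ^+ 2 = `|x| ^+ 2 - 2 * ip x y + `|y| ^+ 2.
Proof. rewrite -!ipxx ipBl !ipBr (ipC y x); ring. Qed.
Lemma CS x y : ip x y <= `|x| * `|y|.
Proof.
have [->|x0] := eqVneq x 0; first by rewrite ip0l normr0 mul0r.
have [->|y0] := eqVneq y 0; first by rewrite ip0r normr0 mulr0.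
have : 0 <= (Num.norm (`|y| *: x - `|x| *: y)) ^+ 2 by rewrite exprn_ge0.
rewrite -ipxx !ipBl !ipBr !ipZl !ipZr !ipxx (ipC y x).
have xp : 0 < `|x| by rewrite normr_gt0.
have yp : 0 < `|y| by rewrite normr_gt0.
move=> hh.
have : (`|x| * `|y|) * ip x y <= (`|x| * `|y|) * (`|x| * `|y|) by nra.
by rewrite ler_pM2l ?mulr_gt0.
Qed.

Lemma small_t (s K : R) : 0 <= K ->
  (forall t, 0 < t -> t <= 1 -> 2 * s <= t * K) -> s <= 0.
Proof.
move=> K0 h; rewrite leNgt; apply/negP => s0.
have sK : 0 < s + K by lra.
have := h (s / (s + K)) (divr_gt0 s0 sK).
rewrite ler_pdivrMr // mul1r => /(_ ltac:(lra)).
rewrite mulrAC ler_pdivlMr //; nra.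
Qed.

Lemma le_sq {a b : R} : 0 <= a -> a <= b -> a ^+ 2 <= b ^+ 2.
Proof. move=> a0 ab; nra. Qed.

Definition VI (D : set H) x p := D p /\ forall r, D r -> ip (x - p) (r - p) <= 0.

Lemma sq_le0 (v : H) : `|v| ^+ 2 <= 0 -> v = 0.
Proof. move=> h; apply/normr0_eq0; have := normr_ge0 v; nra. Qed.

Lemma vi_unique D x p1 p2 : VI D x p1 -> VI D x p2 -> p1 = p2.
Proof.
move=> [D1 h1] [D2 h2]; have := h1 _ D2; have := h2 _ D1.
move=> a b; apply/eqP; rewrite -subr_eq0; apply/eqP/sq_le0.
move: a b; rewrite -ipxx !ipBl !ipBr (ipC p2 p1) (ipC x p1) (ipC x p2); lra.
Qed.

Lemma lip_within (A : set H) (g : H -> R) (L : R) : 0 <= L ->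
  (forall x y, A x -> A y -> `|g x - g y| <= L * `|x - y|) -> {within A, continuous g}.
Proof.
move=> L0 Lg; apply/subspace_continuousP => x Ax.
apply/cvgrPdist_le => /= e e0.
have L1 : 0 < L + 1 by rewrite ltr_wpDl.
rewrite near_withinE.
apply/nbhs_ballP; exists (e / (L + 1)); first by apply: divr_gt0.
move=> y; rewrite -ball_normE /= => xy Ay.
rewrite /from_subspace /=.
apply: le_trans (Lg _ _ Ax Ay) _.
have : L * `|x-y| <= (L+1) * (e/(L+1)).
  by apply: ler_pM => //; [lra | apply: ltW].
by move=> h; apply: le_trans h _; rewrite mulrC divfK // gt_eqF.
Qed.

Lemma proj_exists (F : set H) : F !=set0 -> compact F -> convex_set_in F ->
  forall x, exists p, VI F x p.
Proof.
move=> F0 cF cvF x.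
have cont : {within F, continuous (fun y => `|x - y|)}.
  apply: (@lip_within _ _ 1) => // y1 y2 _ _.
  rewrite mul1r (le_trans (ler_dist_dist _ _)) //.
  have -> : (x - y1) - (x - y2) = y2 - y1 by rewrite opprB addrC addrA subrK.
  by rewrite distrC.
have [p /set_mem Fp pmin] := compact_EVT_min F0 cF cont.
exists p; split => // r Fr.
apply: (@small_t _ (`|r - p| ^+ 2)); first exact: exprn_ge0.
move=> t t0 t1.
have Fm : F (t *: r + (1 - t) *: p) by apply: cvF => //; exact: ltW.
have := le_sq (normr_ge0 _) (pmin _ (mem_set Fm)).
move=> h; rewrite -(ler_pM2l t0); move: h.
rewrite -!ipxx ?(ipBl, ipBr, ipDl, ipDr, ipZl, ipZr, ipNl, ipNr).
rewrite ?(ipC r x) ?(ipC p x) ?(ipC p r) => h; nra.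
Qed.
End Hilbert.


Lemma scale_natK {R : realType} {H : normedModType R} (n : nat) (v : H) :
  (0 < n)%N -> (n%:R : R)^-1 *: (v *+ n) = v.
Proof.
move=> n0; rewrite -scalerMnr scalerMnl -mulr_natr mulVf ?scale1r //.
by rewrite pnatr_eq0 -lt0n.
Qed.

Section Hilbert2.
Context {R : realType} {H : normedModType R} (ip : H -> H -> R).
Hypothesis Hip : is_inner_product ip.
Variables (C : set H) (T : H -> H).
Hypotheses (cvC : convex_set_in C) (TC : maps_into C T) (Tne : nonexpansive_on C T).

Lemma fix_convex : convex_set_in (Fix C T).
Proof.
move=> p1 p2 t [C1 T1] [C2 T2] t0 t1.
set m := t *: p1 + (1 - t) *: p2.
have Cm : C m by exact: cvC.
split => //.
have wid y : `|y - m| ^+ 2 = t * `|y - p1| ^+ 2 + (1 - t) * `|y - p2| ^+ 2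
    - t * (1 - t) * `|p1 - p2| ^+ 2.
  rewrite /m -!(ipxx _ Hip) !(ipBl _ Hip) !(ipBr _ Hip) !(ipDl _ Hip) !(ipDr _ Hip).
  rewrite !(ipZl _ Hip) !(ipZr _ Hip) (ipC _ Hip p1 y) (ipC _ Hip p2 y) (ipC _ Hip p2 p1).
  ring.
have h1 : `|T m - p1| <= `|m - p1| by rewrite -{1}T1; apply: Tne.
have h2 : `|T m - p2| <= `|m - p2| by rewrite -{1}T2; apply: Tne.
have e1 : `|T m - p1| ^+ 2 <= `|m - p1| ^+ 2 by rewrite lerXn2r // nnegrE.
have e2 : `|T m - p2| ^+ 2 <= `|m - p2| ^+ 2 by rewrite lerXn2r // nnegrE.
have w1 := wid (T m); have w0 := wid m.
rewrite subrr normr0 expr0n /= in w0.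
apply/subr0_eq/sq_le0; rewrite w1; nra.
Qed.

Lemma fix_closed : closed C -> closed (Fix C T).
Proof.
move=> clC x clx.
have Cx : C x.
  apply: clC => B nB; have [y [[Cy _] By]] := clx B nB; by exists y.
split => //; apply/subr0_eq/normr0_eq0/eqP.
rewrite eq_le normr_ge0 andbT; apply/ler_addgt0Pr => e e0.
have e20 : 0 < e / 2 by apply: divr_gt0.
have [p [[Cp Tp] /=]] := clx _ (nbhsx_ballx x _ e20).
rewrite -ball_normE /= => xp.
rewrite add0r (le_trans (ler_distD p _ _)) //.
rewrite -{1}Tp (le_trans (lerD (Tne _ _ Cx Cp) (lexx _))) //.
rewrite distrC; lra.
Qed.

Lemma iter_C z k : C z -> C (iter k T z).
Proof. by move=> Cz; elim: k => //= k IH; apply: TC. Qed.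

Lemma iter_fix z p k : C z -> Fix C T p -> `|iter k T z - p| <= `|z - p|.
Proof.
move=> Cz [Cp Tp]; elim: k => //= k IH.
by rewrite -{1}Tp (le_trans (Tne _ _ (iter_C _ k Cz) Cp)).
Qed.

Lemma avg_convex n (v : nat -> H) : (0 < n)%N ->
  (forall k, (1 <= k <= n)%N -> C (v k)) ->
  C (n%:R^-1 *: \sum_(1 <= k < n.+1) v k).
Proof.
elim: n => [//|n IH] _ hv.
case: n IH hv => [|n] IH hv.
  by rewrite big_nat1 invr1 scale1r; apply: hv.
rewrite big_nat_recr //= scalerDr.
have n0 : (n.+1%:R : R) != 0 by rewrite pnatr_eq0.
have n1 : (n.+2%:R : R) != 0 by rewrite pnatr_eq0.
set t : R := n.+1%:R / n.+2%:R.
have -> : n.+2%:R^-1 *: \sum_(1 <= i < n.+2) v i =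
    t *: (n.+1%:R^-1 *: \sum_(1 <= i < n.+2) v i).
  rewrite scalerA /t; congr (_ *: _); field.
  by apply/andP; split; apply/negP => /eqP h; have := ler0n R n; lra.
have -> : n.+2%:R^-1 *: v n.+2 = (1 - t) *: v n.+2.
  congr (_ *: _); rewrite /t; field.
  by apply/negP => /eqP h; have := ler0n R n; lra.
apply: cvC.
- apply: IH => // k /andP[k1 kn]; apply: hv; rewrite k1 /=; exact: leqW.
- by apply: (hv n.+2); rewrite leqnn.
- by rewrite /t divr_ge0.
- by rewrite /t ler_pdivrMr ?ltr0n // mul1r ler_nat.
Qed.

Lemma cesaro_C n z : (0 < n)%N -> C z -> C (cesaro_avg n T z).
Proof. by move=> n0 Cz; apply: avg_convex => // k _; apply: iter_C. Qed.


Lemma cesaro_fix n z p : (0 < n)%N -> C z -> Fix C T p ->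
  `|cesaro_avg n T z - p| <= `|z - p|.
Proof.
move=> n0 Cz Fp; rewrite /cesaro_avg.
have nz : (n%:R : R) != 0 by rewrite pnatr_eq0 -lt0n.
have -> : n%:R^-1 *: \sum_(1 <= k < n.+1) iter k T z - p =
    n%:R^-1 *: \sum_(1 <= k < n.+1) (iter k T z - p).
  rewrite sumrB sumr_const_nat subSS subn0 scalerBr; congr (_ - _).
  by rewrite scale_natK.
rewrite normrZ ger0_norm ?invr_ge0 ?ler0n //.
apply: le_trans (ler_wpM2l _ (ler_norm_sum _ _ _)) _; first by rewrite invr_ge0.
have hs : \sum_(1 <= i < n.+1) `|iter i T z - p| <= \sum_(1 <= i < n.+1) `|z - p|.
  by apply: ler_sum => k _; exact: iter_fix.
apply: le_trans (ler_wpM2l _ hs) _; first by rewrite invr_ge0.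
rewrite sumr_const_nat subn1 /= -[`|z - p| *+ n]mulr_natl mulKf //.
Qed.

Lemma cesaro_reg n z D : (0 < n)%N -> C z ->
  (forall a b, C a -> C b -> `|a - b| <= D) ->
  n%:R * `|T (cesaro_avg n T z) - cesaro_avg n T z| ^+ 2 <= D ^+ 2.
Proof.
move=> n0 Cz hD.
have nz : (n%:R : R) != 0 by rewrite pnatr_eq0 -lt0n.
set ub := cesaro_avg n T z.
have Cu : C ub by apply: cesaro_C.
have Cuk k : C (iter k T z) by apply: iter_C.
have sid y : \sum_(1 <= k < n.+1) `|y - iter k T z| ^+ 2 =
    n%:R * `|y - ub| ^+ 2 + \sum_(1 <= k < n.+1) `|ub - iter k T z| ^+ 2.
  have e k : `|y - iter k T z| ^+ 2 =
      `|y - ub| ^+ 2 + 2 * ip (y - ub) (ub - iter k T z) + `|ub - iter k T z| ^+ 2.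
    by rewrite -(normD2 _ Hip) addrA subrK.
  rewrite (eq_bigr _ (fun k _ => e k)) !big_split /= sumr_const_nat subSS subn0.
  rewrite -mulr_sumr -(ip_sumr _ Hip).
  have -> : \sum_(1 <= i < n.+1) (ub - iter i T z) = 0.
    rewrite sumrB sumr_const_nat subSS subn0 /ub /cesaro_avg scalerMnr.
    by rewrite scale_natK // subrr.
  by rewrite (ip0r _ Hip) mulr0 addr0 mulr_natl.
have h1 : \sum_(1 <= k < n.+1) `|T ub - iter k.+1 T z| ^+ 2 <=
    \sum_(1 <= k < n.+1) `|ub - iter k T z| ^+ 2.
  apply: ler_sum => k _; apply: le_sq; first exact: normr_ge0.
  by rewrite iterS; apply: Tne => //; apply: Cuk.
have h2 : \sum_(1 <= i < n.+2) `|T ub - iter i T z| ^+ 2 =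
    `|T ub - iter 1 T z| ^+ 2 + \sum_(1 <= i < n.+1) `|T ub - iter i.+1 T z| ^+ 2.
  by rewrite big_nat_recl.
have h3 : \sum_(1 <= i < n.+2) `|T ub - iter i T z| ^+ 2 =
    \sum_(1 <= i < n.+1) `|T ub - iter i T z| ^+ 2 + `|T ub - iter n.+1 T z| ^+ 2.
  by rewrite big_nat_recr.
have h4 := sid (T ub).
have b := le_sq (normr_ge0 _) (hD _ _ (TC _ Cu) (Cuk 1%N)).
have c := sqr_ge0 `|T ub - iter n.+1 T z|.
lra.
Qed.

End Hilbert2.


Lemma cluster_seq {R : realType} {H : normedModType R} (K : set H) (v : nat -> H) :
  compact K -> (forall n, K (v n)) ->
  exists w, K w /\ forall e, 0 < e -> forall N, exists n, (N <= n)%N /\ `|v n - w| < e.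
Proof.
move=> cK hv.
have FK : (v @ \oo) K by exists 0%N => // n _; apply: hv.
have [w [Kw clw]] := cK _ _ FK.
exists w; split => // e e0 N.
have FA : (v @ \oo) [set y | exists n, (N <= n)%N /\ y = v n].
  by exists N => // n /= Nn; exists n.
have [y [[n [Nn ->]] /= vb]] := clw _ _ FA (nbhsx_ballx w _ e0).
by exists n; split => //; move: vb; rewrite -ball_normE /= distrC.
Qed.

Section Main.
Context {R : realType} {H : normedModType R} (ip : H -> H -> R).
Hypothesis Hip : is_inner_product ip.
Variables (C : set H) (T f : H -> H) (alpha : R).
Hypotheses (cC : compact C) (cvC : convex_set_in C) (TC : maps_into C T)
  (Tne : nonexpansive_on C T) (F0 : Fix C T !=set0) (fC : maps_into C f)
  (fc : contraction_on C f alpha).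

Let F := Fix C T.

Lemma F_compact : compact F.
Proof.
apply: (subclosed_compact _ cC); last by move=> x [].
apply: fix_closed => //; exact: (compact_closed (@norm_hausdorff _ _) cC).
Qed.

Lemma P_exists : exists P : H -> H, forall x, VI ip F x (P x).
Proof.
have := proj_exists _ Hip _ F0 F_compact (fix_convex _ Hip _ _ cvC Tne).
by move=> /choice[P hP]; exists P.
Qed.

Variable P : H -> H.
Hypothesis hP : forall x, VI ip F x (P x).

Lemma P_snr : sunny_nonexpansive_retraction C F P.
Proof.
split; [split|split].
- by move=> x _; case: (hP x).
- move=> x Fx; apply: (vi_unique _ Hip _ _ _ _ (hP x)); split => // r _.
  by rewrite subrr (ip0l _ Hip).
- move=> x t Cx t0 _.
  set y := P x + t *: (x - P x).
  apply: (vi_unique _ Hip _ _ _ _ (hP y)); split; first by case: (hP x).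
  move=> r Fr; rewrite /y addrAC subrr add0r (ipZl _ Hip).
  by apply: mulr_ge0_le0 => //; case: (hP x) => _; apply.
- move=> x y Cx Cy.
  have [_ h1] := hP x; have [_ h2] := hP y.
  have Fx : F (P x) by case: (hP x).
  have Fy : F (P y) by case: (hP y).
  have k1 := h1 _ Fy; have k2 := h2 _ Fx.
  have key : `|P x - P y| ^+ 2 <= ip (x - y) (P x - P y).
    move: k1 k2; rewrite -(ipxx _ Hip) ?(ipBl _ Hip, ipBr _ Hip).
    rewrite ?(ipC _ Hip (P y) x) ?(ipC _ Hip (P x) y) ?(ipC _ Hip (P y) (P x)) => k1 k2.
    lra.
  have cs := CS _ Hip (x - y) (P x - P y).
  have a0 := normr_ge0 (P x - P y); have b0 := normr_ge0 (x - y).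
  nra.
Qed.

Lemma Q_unique Q : sunny_nonexpansive_retraction C F Q ->
  forall y, C y -> Q y = P y.
Proof.
move=> [[QF Qid] [Qs Qn]] y Cy.
apply: (vi_unique _ Hip _ _ _ _ _ (hP y)); split; first exact: QF.
move=> p Fp.
have CQ : C (Q y) by case: (QF _ Cy).
apply: (@small_t _ _ (`|y - Q y| ^+ 2)); first exact: exprn_ge0.
move=> t t0 t1.
have eyt : Q y + t *: (y - Q y) = t *: y + (1 - t) *: Q y.
  by rewrite scalerBr scalerBl scale1r addrCA.
have Cyt : C (Q y + t *: (y - Q y)) by rewrite eyt; apply: cvC => //; exact: ltW.
have := Qn _ _ Cyt (proj1 Fp).
rewrite (Qs _ _ Cy (ltW t0) Cyt) (Qid _ Fp) => h.
have := le_sq (normr_ge0 _) h.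
move=> {}h; rewrite -(ler_pM2l t0); move: h.
rewrite -!(ipxx _ Hip) ?(ipBl _ Hip, ipBr _ Hip, ipDl _ Hip, ipDr _ Hip, ipZl _ Hip, ipZr _ Hip, ipNl _ Hip, ipNr _ Hip).
rewrite ?(ipC _ Hip (Q y) y) ?(ipC _ Hip p y) ?(ipC _ Hip p (Q y)) => h; nra.
Qed.


Lemma q_exists : exists q, F q /\ P (f q) = q.
Proof.
have [a0 [a1 Lf]] := fc.
have Pn : nonexpansive_on C P by case: P_snr => _ [].
have FC : forall y, F y -> C y by move=> y [].
have PF : forall x, F (P x) by move=> x; case: (hP x).
pose phi := fun y => `|y - P (f y)|.
have cont : {within F, continuous phi}.
  apply: (@lip_within _ _ _ _ (1 + alpha)); first lra.
  move=> y1 y2 F1 F2; rewrite /phi.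
  have t1 := ler_distD y2 y1 (P (f y1)).
  have t2 := ler_distD (P (f y2)) y2 (P (f y1)).
  have t3 := ler_distD y1 y2 (P (f y2)).
  have t4 := ler_distD (P (f y1)) y1 (P (f y2)).
  have p1 : `|P (f y1) - P (f y2)| <= alpha * `|y1 - y2|.
    apply: le_trans (Pn _ _ (fC _ (FC _ F1)) (fC _ (FC _ F2))) _.
    exact: Lf _ _ (FC _ F1) (FC _ F2).
  rewrite (distrC (P (f y2))) in t2.
  rewrite (distrC y2 y1) in t3.
  rewrite ler_norml; apply/andP; split; lra.
have [y0 /set_mem Fy0 hmin] := compact_EVT_min F0 F_compact cont.
exists y0; split => //.
set y1 := P (f y0).
have Fy1 : F y1 by apply: PF.
have := hmin y1 (mem_set Fy1); rewrite /phi.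
have : `|P (f y0) - P (f y1)| <= alpha * `|y0 - y1|.
  apply: le_trans (Pn _ _ (fC _ (FC _ Fy0)) (fC _ (FC _ Fy1))) _.
  exact: Lf _ _ (FC _ Fy0) (FC _ Fy1).
rewrite -/y1 (distrC y1 (P (f y1))) => h1 h2.
apply/esym/subr0_eq/normr0_eq0.
have := normr_ge0 (y0 - y1); rewrite -/y1; nra.
Qed.

Variable q : H.
Hypotheses (Fq : F q) (Pq : P (f q) = q).
Variable eps : nat -> R.
Hypotheses (heps : forall n, 0 < eps n /\ eps n < 1) (eps0 : eps @ \oo --> 0).
Variable u : nat -> H.
Hypothesis hu : forall n, (0 < n)%N -> C (u n) /\
  u n = eps n *: f (u n) + (1 - eps n) *: cesaro_avg n T (u n).

Lemma VIq p : F p -> ip (f q - q) (p - q) <= 0.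
Proof. by move=> Fp; have [_ h] := hP (f q); rewrite Pq in h; apply: h. Qed.

Lemma comb_sub (e : R) (x y : H) : e *: x + (1 - e) *: y - y = e *: (x - y).
Proof. by rewrite scalerBl scale1r scalerBr addrCA addrAC subrr add0r. Qed.

Lemma visc n p : (0 < n)%N -> F p ->
  `|u n - p| ^+ 2 <= ip (f (u n) - p) (u n - p).
Proof.
move=> n0 Fp; have [Cu hun] := hu _ n0.
have [e0 e1] := heps n.
have hSp := @cesaro_fix _ _ C T TC Tne n (u n) p n0 Cu Fp.
have hcs := CS _ Hip (cesaro_avg n T (u n) - p) (u n - p).
have h0 : `|u n - p| ^+ 2 = eps n * ip (f (u n)) (u n - p)
   + (1 - eps n) * ip (cesaro_avg n T (u n)) (u n - p) - ip p (u n - p).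
  by rewrite -(ipxx _ Hip) {1}hun (ipBl _ Hip) (ipDl _ Hip) !(ipZl _ Hip).
rewrite (ipBl _ Hip) in hcs; rewrite (ipBl _ Hip).
have m1 : (1 - eps n) * (ip (cesaro_avg n T (u n)) (u n - p) - ip p (u n - p))
    <= (1 - eps n) * `|u n - p| ^+ 2.
  apply: ler_wpM2l; first lra.
  apply: le_trans hcs _; rewrite expr2; apply: ler_wpM2r => //.
rewrite -(ler_pM2l e0); lra.
Qed.

Lemma bound_q n : (0 < n)%N ->
  (1 - alpha) * `|u n - q| ^+ 2 <= ip (f q - q) (u n - q).
Proof.
move=> n0; have [Cu _] := hu _ n0.
have [a0 [a1 Lf]] := fc.
have v := visc n q n0 Fq.
have hcs := CS _ Hip (f (u n) - f q) (u n - q).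
have hL : `|f (u n) - f q| <= alpha * `|u n - q| by apply: Lf => //; case: Fq.
have hh : `|f (u n) - f q| * `|u n - q| <= alpha * `|u n - q| ^+ 2.
  by rewrite expr2 mulrA; apply: ler_wpM2r.
move: v hcs; rewrite !(ipBl _ Hip) => v hcs; lra.
Qed.


Lemma asreg e : 0 < e -> exists N, forall n, (N <= n)%N -> `|u n - T (u n)| < e.
Proof.
move=> e0.
have /ex_strict_bound_gt0[M M0 hM] := compact_bounded cC.
set D := 2 * M.
have hD : forall a b, C a -> C b -> `|a - b| <= D.
  move=> a b Ca Cb; apply: le_trans (ler_normB a b) _.
  have := hM a Ca; have := hM b Cb; rewrite /D /=; lra.
have D0 : 0 <= D by rewrite /D; lra.
have k0 : 0 < e / (4 * (D + 1)) by apply: divr_gt0 => //; lra.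
have [N1 _ hN1] := (cvgrPdist_lt _ _).1 eps0 _ k0.
have [N2 _ hN2] := nbhs_infty_ger (4 * D ^+ 2 / e ^+ 2 + 1).
exists (maxn (maxn N1 N2) 1) => n; rewrite !geq_max => /andP[/andP[n1 n2] n0].
have [Cu hun] := hu _ n0.
have [ep0 ep1] := heps n.
set S := cesaro_avg n T (u n).
have CS' : C S by apply: cesaro_C.
have r1 : `|u n - S| = eps n * `|f (u n) - S|.
  by rewrite {1}hun comb_sub normrZ gtr0_norm.
have r2 := ler_distD S (u n) (T (u n)).
have r3 := ler_distD (T S) S (T (u n)).
have r4 : `|T S - T (u n)| <= `|u n - S| by rewrite distrC; apply: Tne.
have r5 : `|f (u n) - S| <= D by apply: hD => //; apply: fC.
have r6 := @cesaro_reg _ _ ip Hip C T cvC TC Tne n (u n) D n0 Cu hD.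
have r7 : `|0 - eps n| < e / (4 * (D + 1)) by apply: hN1.
rewrite sub0r normrN gtr0_norm // in r7.
have r8 := hN2 _ n2; rewrite /= in r8.
have r9 : eps n * `|f (u n) - S| <= e / 4.
  apply: le_trans (ler_wpM2l (ltW ep0) r5) _.
  apply: le_trans (ler_wpM2r D0 (ltW r7)) _.
  rewrite mulrC mulrA ler_pdivrMr; last lra.
  have -> : e / 4 * (4 * (D + 1)) = e * (D + 1) by field.
  nra.
have r10 : `|S - T S| < e / 2.
  rewrite ltNge; apply/negP => hge.
  have e2 : 0 < e ^+ 2 by rewrite exprn_gt0.
  have : 4 * D ^+ 2 < n%:R * e ^+ 2.
    have : 4 * D ^+ 2 / e ^+ 2 < n%:R by lra.
    by rewrite ltr_pdivrMr.
  have s1 : (e / 2) ^+ 2 <= `|S - T S| ^+ 2 by apply: le_sq => //; lra.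
  rewrite distrC in r6.
  have n00 : 0 <= (n%:R : R) by [].
  have : n%:R * (e / 2) ^+ 2 <= n%:R * `|T S - S| ^+ 2.
    by rewrite distrC; apply: ler_wpM2l.
  rewrite !expr2 in r6 e2 *; rewrite -!expr2.
  move=> h1 h2; nra.
rewrite r1 in r4 r2.
lra.
Qed.

Lemma conv : u @ \oo --> q.
Proof.
have [a0 [a1 Lf]] := fc.
apply/cvgrPdist_lt => e e0.
set dl := (1 - alpha) * e ^+ 2.
have dl0 : 0 < dl by rewrite /dl mulr_gt0 ?exprn_gt0 //; lra.
suff [N hN] : exists N, forall n, (N <= n)%N -> ip (f q - q) (u n - q) < dl.
  exists (maxn N 1) => // n; rewrite /= geq_max => /andP[nN n0].
  have b := bound_q n n0; have := hN _ nN.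
  rewrite /dl distrC => h.
  have : `|u n - q| ^+ 2 < e ^+ 2.
    by rewrite -(ltr_pM2l (_ : 0 < 1 - alpha)); [lra | lra].
  have := normr_ge0 (u n - q); nra.
apply: contrapT => hN.
have hs : forall N, exists n, [/\ (N <= n)%N, (0 < n)%N & dl <= ip (f q - q) (u n - q)].
  move=> N; apply: contrapT => hn; apply: hN; exists N.+1 => n hn1.
  rewrite ltNge; apply/negP => h; apply: hn; exists n; split => //.
    exact: ltnW.
  exact: leq_ltn_trans hn1.
have [sg hsg] := choice hs.
have Csg : forall m, C (u (sg m)) by move=> m; have [_ p _] := hsg m; case: (hu _ p).
have [w [Cw hw]] := cluster_seq _ _ cC Csg.
have Fw : F w.
  split => //; apply/subr0_eq/normr0_eq0/eqP; rewrite eq_le normr_ge0 andbT.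
  apply/ler_addgt0Pr => et et0; rewrite add0r.
  have et3 : 0 < et / 3 by apply: divr_gt0.
  have [N1 hN1] := asreg _ et3.
  have [m [m1 hm]] := hw _ et3 N1.
  have [sm p _] := hsg m.
  have ha := hN1 _ (leq_trans m1 sm).
  have [Cu _] := hu _ p.
  have t1 := ler_distD (T (u (sg m))) (T w) w.
  have t2 := ler_distD (u (sg m)) (T (u (sg m))) w.
  have t3 : `|T w - T (u (sg m))| <= `|w - u (sg m)| by apply: Tne.
  rewrite (distrC w (u (sg m))) in t3; rewrite (distrC (u (sg m)) (T (u (sg m)))) in ha.
  lra.
have vw := VIq _ Fw.
set K := `|f q - q|.
have K0 : 0 <= K by exact: normr_ge0.
have k0 : 0 < dl / (K + 1) by apply: divr_gt0 => //; lra.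
have [m [_ hm]] := hw _ k0 0%N.
have [_ _ hb] := hsg m.
have hcs := CS _ Hip (f q - q) (u (sg m) - w).
have hk : K * `|u (sg m) - w| <= K * (dl / (K + 1)) by apply: ler_wpM2l => //; apply: ltW.
have hk2 : K * (dl / (K + 1)) < dl.
  rewrite mulrA ltr_pdivrMr; [nra | lra].
move: hb vw hcs; rewrite !(ipBr _ Hip) => hb vw hcs.
rewrite -/K in hcs; lra.
Qed.

End Main.


Lemma per_index {R : realType} {H : normedModType R} (ip : H -> H -> R)
  (Hip : is_inner_product ip) (C : set H) (T f : H -> H) (alpha : R) (eps : nat -> R) :
  compact C -> convex_set_in C -> maps_into C T -> nonexpansive_on C T ->
  Fix C T !=set0 -> maps_into C f -> contraction_on C f alpha ->
  (forall n, 0 < eps n /\ eps n < 1) -> eps @ \oo --> 0 ->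
  exists Pq : (H -> H) * H,
    (sunny_nonexpansive_retraction C (Fix C T) Pq.1 /\
     (forall Q : H -> H, sunny_nonexpansive_retraction C (Fix C T) Q ->
        forall y, C y -> Q y = Pq.1 y) /\ C Pq.2) /\
    Pq.1 Pq.2 = Pq.2 /\
    forall u : nat -> H,
      (forall n, (0 < n)%N -> C (u n) /\
         u n = eps n *: f (u n) + (1 - eps n) *: cesaro_avg n T (u n)) ->
      u @ \oo --> Pq.2.
Proof.
move=> cC cvC TC Tne F0 fC fc heps eps0.
have [P hP] := P_exists _ Hip _ _ cC cvC Tne F0.
have [q [Fq Pq]] := q_exists _ Hip _ _ _ _ cC Tne F0 fC fc _ hP.
have snr := P_snr _ Hip _ _ _ hP.
exists (P, q) => /=; split; [split; [exact: snr | split] | split].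
- by move=> Q hQ y Cy; apply: (Q_unique _ Hip _ _ cvC _ hP).
- by case: Fq.
- by case: snr => [[_ ->]].
- by move=> u hu; apply: (conv _ Hip _ _ _ _ cC cvC TC Tne fC fc _ hP _ Fq Pq _ heps eps0 _ hu).
Qed.

Lemma ptws_cvg (R : realType) (H : normedModType R) (I : Type) (z : nat -> I -> H) (x : I -> H) :
  (forall i, (fun n => z n i) @ \oo --> x i) ->
  (fun n => (z n : {ptws I -> H})) @ \oo --> (x : {ptws I -> H}).
Proof.
move=> hc.
apply/(@cvg_sup _ _ (fun i => Topological.class (initial_topology (fun f : (I -> H) => f i)))) => i.
apply/cvg_image => //.
  by apply/seteqP; split => // y _; exists (fun _ => y).
move=> B /= Bx.
exists ((fun f : I -> H => f i) @^-1` B).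
  exact: (hc i B Bx).
by apply: image_preimage; apply/seteqP; split => // y _; exists (fun _ => y).
Qed.

Theorem corollary4p1 (R : realType) (H : completeNormedModType R)
  (ip : H -> H -> R) (I : Type) (C : I -> set H) (T f : I -> H -> H)
  (alpha : I -> R) (eps : nat -> R) :
  is_inner_product ip ->
  (exists i0 : I, True) ->
  (forall i, C i !=set0) ->
  (forall i, compact (C i)) ->
  (forall i, convex_set_in (C i)) ->
  (forall i, maps_into (C i) (T i)) ->
  (forall i, nonexpansive_on (C i) (T i)) ->
  (forall i, Fix (C i) (T i) !=set0) ->
  (forall i, maps_into (C i) (f i)) ->
  (forall i, contraction_on (C i) (f i) (alpha i)) ->
  (forall n, 0 < eps n /\ eps n < 1) ->
  eps @ \oo --> 0 ->
  exists P : I -> H -> H, exists x : I -> H,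
    (forall i,
       sunny_nonexpansive_retraction (C i) (Fix (C i) (T i)) (P i) /\
       (forall Q : H -> H,
          sunny_nonexpansive_retraction (C i) (Fix (C i) (T i)) Q ->
          forall y, C i y -> Q y = P i y) /\
       C i (x i)) /\
    forall z : nat -> I -> H,
      (forall (n : nat) (i : I), (0 < n)%N ->
         C i (z n i) /\
         z n i = eps n *: f i (z n i)
                 + (1 - eps n) *: cesaro_avg n (T i) (z n i)) ->
      (fun n => (z n : {ptws I -> H})) @ \oo
        --> ((fun i => P i (x i)) : {ptws I -> H}).
Proof.
move=> Hip _ _ cC cvC TC Tne F0 fC fc heps eps0.
have [Pq hPq] := choice (fun i => per_index _ Hip _ _ _ _ _ (cC i) (cvC i) (TC i) (Tne i)
  (F0 i) (fC i) (fc i) heps eps0).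
exists (fun i => (Pq i).1), (fun i => (Pq i).2); split.
  by move=> i; case: (hPq i).
move=> z hz; apply: ptws_cvg => i.
have [_ [-> hc]] := hPq i.
exact: (hc (fun n => z n i) (fun n n0 => hz n i n0)).
Qed.
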